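(* Let $P:\mathcal X\to\mathcal B$ be a fibration with fibered pullbacks, let $(p,P)$ and $(q,P)$ be pointed fibrations, and let $\alpha:p\Rightarrow q$ be a natural transformation with $P$-vertical components. Then: (i) for every object $(I,x:X\to qI)$ of the total category of $P/q$, taking the pullback of $x$ along $\alpha_I:pI\to qI$, giving $x':X'\to pI$, defines an assignment $(I,x)\mapsto(I,x':X'\to pI)$ which extends to a fibered functor $\alpha^*:P/q\to_{\mathcal B}P/p$; (ii) the assignment $(I,x:X\to pI)\mapsto(I,\alpha_I\circ x:X\to qI)$ on objects of the total category of $P/p$ (and $(u,f)\mapsto(u,f)$ on morphisms) extends to a fibered functor $\Sigma_\alpha:P/p\to_{\mathcal B}P/q$; (iii) there is a fibered adjunction $\Sigma_\alpha\dashv\alpha^*$ between $P/p$ and $P/q$ in $\mathbf{Fib}(\mathcal B)$.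
   Context: For $P:\mathcal X\to\mathcal B$: $f:X\to Y$ is $P$-cartesian if for every $v:K\to PX$ and $g:Z\to Y$ with $Pg=Pf\circ v$ there is a unique $h:Z\to X$ with $fh=g$, $Ph=v$; $P$ is a fibration if every $Y$ and $u:I\to PY$ admit a cartesian $f$ with $Pf=u$; $f$ is $P$-vertical if $Pf$ is an identity; the fiber $P_I$ consists of morphisms over $1_I$. $P$ has fibered pullbacks if each fiber has pullbacks stable under reindexing. Fibered functors between fibrations over $\mathcal B$ commute with projections and preserve cartesian morphisms; a fibered adjunction is an adjunction between fibered functors with vertical unit and counit; $\mathbf{Fib}(\mathcal B)$ is the 2-category of fibrations over $\mathcal B$, fibered functors and vertical natural transformations. A pointed fibration $(p,P)$ is a fibration with a functor $p:\mathcal B\to\mathcal X$, $Pp=1_{\mathcal B}$, sending every morphism to a $P$-cartesian morphism. The slice fibration $P/p:\mathcal Y\to\mathcal B$: objects of $\mathcal Y$ are pairs $(I,x:X\to pI)$ with $x$ $P$-vertical over $I$; morphisms $(I,x)\to(J,y)$ are pairs $(u,f)$ with $u:I\to J$ in $\mathcal B$, $f:X\to Y$ in $\mathcal X$, $y\circ f=pu\circ x$; $P/p$ is the first projection (it is the change of base of the codomain fibration $\mathbf{cod}_P:V(P)\to\mathcal X$, on $P$-vertical arrows, along $p$). Its cartesian morphisms are those $(u,f)$ whose square $y f=pu\, x$ is a pullback in $\mathcal X$. The pullback in (i) is taken in the fiber $P_I$. *)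

(* Defs.v *)
From Stdlib Require Import ProofIrrelevance.

Set Implicit Arguments.
Unset Strict Implicit.

Record Category := {
  Ob :> Type;
  Hom : Ob -> Ob -> Type;
  comp : forall a b c : Ob, Hom b c -> Hom a b -> Hom a c;
  idm : forall a : Ob, Hom a a;
  comp_assoc : forall a b c d (f : Hom a b) (g : Hom b c) (h : Hom c d),
      comp h (comp g f) = comp (comp h g) f;
  comp_id_l : forall a b (f : Hom a b), comp (idm b) f = f;
  comp_id_r : forall a b (f : Hom a b), comp f (idm a) = f }.

Arguments Hom {C} : rename.
Arguments comp {C a b c} : rename.
Arguments idm {C} : rename.

Record Functor (C D : Category) := {
  Fob :> Ob C -> Ob D;
  Fmor : forall a b : Ob C, Hom a b -> Hom (Fob a) (Fob b);
  F_id : forall a, Fmor (idm a) = idm (Fob a);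
  F_comp : forall a b c (f : Hom a b) (g : Hom b c),
      Fmor (comp g f) = comp (Fmor g) (Fmor f) }.

Arguments Fmor {C D} F {a b} : rename.

Record NatTrans (C D : Category) (F G : Functor C D) := {
  nt :> forall a : Ob C, Hom (F a) (G a);
  nt_nat : forall a b (f : Hom a b), comp (nt b) (Fmor F f) = comp (Fmor G f) (nt a) }.

(** A morphism packed together with its domain and codomain; equality of packed
    morphisms is equality of morphisms "with possibly different (but equal)
    endpoints", used e.g. to say that [P f] is the identity of [I]. *)
Definition harr (C : Category) := { ab : Ob C * Ob C & Hom (fst ab) (snd ab) }.
Definition pack {C : Category} {a b : Ob C} (f : Hom a b) : harr C :=
  existT (fun ab : Ob C * Ob C => Hom (fst ab) (snd ab)) (a, b) f.

Section Fib.
Context {X B : Category} (P : Functor X B).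

Definition is_cartesian {A Y : Ob X} (f : Hom A Y) : Prop :=
  forall (Z : Ob X) (v : Hom (P Z) (P A)) (g : Hom Z Y),
    Fmor P g = comp (Fmor P f) v ->
    exists! h : Hom Z A, comp f h = g /\ Fmor P h = v.

Definition is_fibration : Prop :=
  forall (Y : Ob X) (I : Ob B) (u : Hom I (P Y)),
    exists (A : Ob X) (f : Hom A Y), is_cartesian f /\ pack (Fmor P f) = pack u.

Definition over_id (I : Ob B) {A Y : Ob X} (f : Hom A Y) : Prop :=
  pack (Fmor P f) = pack (idm I).

Definition vertical {A Y : Ob X} (f : Hom A Y) : Prop :=
  exists I : Ob B, over_id I f.

Definition fiber_pullback (I : Ob B) {A Y Z W : Ob X}
  (f : Hom A Z) (g : Hom Y Z) (a : Hom W A) (b : Hom W Y) : Prop :=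
  over_id I f /\ over_id I g /\ over_id I a /\ over_id I b /\
  comp f a = comp g b /\
  forall (W' : Ob X) (a' : Hom W' A) (b' : Hom W' Y),
    over_id I a' -> over_id I b' -> comp f a' = comp g b' ->
    exists! h : Hom W' W, over_id I h /\ comp a h = a' /\ comp b h = b'.

(** P has fibered pullbacks: every fiber has pullbacks, and these are stable
    under reindexing (the reindexing of a pullback square of P_I along
    u : J -> I, computed with cartesian liftings, is a pullback in P_J). *)
Definition has_fibered_pullbacks : Prop :=
  (forall (I : Ob B) (A Y Z : Ob X) (f : Hom A Z) (g : Hom Y Z),
      over_id I f -> over_id I g ->
      exists (W : Ob X) (a : Hom W A) (b : Hom W Y), fiber_pullback I f g a b)
  /\
  (forall (I J : Ob B) (u : Hom J I) (A Y Z W : Ob X)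
      (f : Hom A Z) (g : Hom Y Z) (a : Hom W A) (b : Hom W Y),
      fiber_pullback I f g a b ->
      forall (A' Y' Z' W' : Ob X)
        (cA : Hom A' A) (cY : Hom Y' Y) (cZ : Hom Z' Z) (cW : Hom W' W)
        (f' : Hom A' Z') (g' : Hom Y' Z') (a' : Hom W' A') (b' : Hom W' Y'),
        is_cartesian cA -> is_cartesian cY -> is_cartesian cZ -> is_cartesian cW ->
        pack (Fmor P cA) = pack u -> pack (Fmor P cY) = pack u ->
        pack (Fmor P cZ) = pack u -> pack (Fmor P cW) = pack u ->
        over_id J f' -> over_id J g' -> over_id J a' -> over_id J b' ->
        comp cZ f' = comp f cA -> comp cZ g' = comp g cY ->
        comp cA a' = comp a cW -> comp cY b' = comp b cW ->
        fiber_pullback J f' g' a' b').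

Definition is_pointed (p : Functor B X) : Prop :=
  is_fibration /\
  (forall (I J : Ob B) (u : Hom I J), pack (Fmor P (Fmor p u)) = pack u) /\
  (forall (I J : Ob B) (u : Hom I J), is_cartesian (Fmor p u)).

End Fib.

Section Slice.
Context {X B : Category} (P : Functor X B) (p : Functor B X).

Record slob := {
  s_I : Ob B;
  s_X : Ob X;
  s_x : Hom s_X (p s_I);
  s_vert : over_id P s_I s_x }.

Record slhom (o o' : slob) := {
  s_u : Hom (s_I o) (s_I o');
  s_f : Hom (s_X o) (s_X o');
  s_sq : comp (s_x o') s_f = comp (Fmor p s_u) (s_x o) }.

Lemma slhom_eq (o o' : slob) (m n : slhom o o') :
  s_u m = s_u n -> s_f m = s_f n -> m = n.
Proof.
  destruct m as [u f e], n as [u' f' e']; simpl; intros H1 H2; subst.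
  f_equal; apply proof_irrelevance.
Qed.

Program Definition sl_id (o : slob) : slhom o o :=
  {| s_u := idm (s_I o); s_f := idm (s_X o) |}.
Next Obligation.
  intros; rewrite (F_id p), comp_id_l, comp_id_r; reflexivity.
Qed.

Program Definition sl_comp (o1 o2 o3 : slob) (n : slhom o2 o3) (m : slhom o1 o2)
  : slhom o1 o3 :=
  {| s_u := comp (s_u n) (s_u m); s_f := comp (s_f n) (s_f m) |}.
Next Obligation.
  intros; rewrite (F_comp p), comp_assoc, (s_sq n), <- comp_assoc, (s_sq m), comp_assoc.
  reflexivity.
Qed.

Program Definition SliceCat : Category :=
  {| Ob := slob; Hom := slhom; comp := sl_comp; idm := sl_id |}.
Next Obligation. intros; apply slhom_eq; simpl; apply comp_assoc. Qed.
Next Obligation. intros; apply slhom_eq; simpl; apply comp_id_l. Qed.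
Next Obligation. intros; apply slhom_eq; simpl; apply comp_id_r. Qed.

Program Definition SliceProj : Functor SliceCat B :=
  {| Fob := s_I; Fmor := fun o o' (m : slhom o o') => s_u m |}.
Next Obligation. intros; reflexivity. Qed.
Next Obligation. intros; reflexivity. Qed.

Definition sl_data (o : slob) : { I : Ob B & { A : Ob X & Hom A (p I) } } :=
  existT _ (s_I o) (existT _ (s_X o) (s_x o)).

End Slice.

Arguments s_u {X B P p o o'} : rename.
Arguments s_f {X B P p o o'} : rename.

Definition fibered_functor {B E E' : Category} (PE : Functor E B) (PE' : Functor E' B)
  (F : Functor E E') : Prop :=
  (forall (a b : Ob E) (m : Hom a b), pack (Fmor PE' (Fmor F m)) = pack (Fmor PE m)) /\
  (forall (a b : Ob E) (m : Hom a b), is_cartesian PE m -> is_cartesian PE' (Fmor F m)).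


Section FibFun.
Context {B E E' : Category} (PE : Functor E B) (PE' : Functor E' B).

Definition fibered_adjunction (L : Functor E E') (R : Functor E' E) : Prop :=
  fibered_functor PE PE' L /\ fibered_functor PE' PE R /\
  exists (eta : forall a : Ob E, Hom a (R (L a)))
         (eps : forall b : Ob E', Hom (L (R b)) b),
    (forall a a' (f : Hom a a'), comp (eta a') f = comp (Fmor R (Fmor L f)) (eta a)) /\
    (forall b b' (g : Hom b b'), comp (eps b') (Fmor L (Fmor R g)) = comp g (eps b)) /\
    (forall a, comp (eps (L a)) (Fmor L (eta a)) = idm (L a)) /\
    (forall b, comp (Fmor R (eps b)) (eta (R b)) = idm (R b)) /\
    (forall a, vertical PE (eta a)) /\
    (forall b, vertical PE' (eps b)).

End FibFun.

Section AlphaFun.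
Context {X B : Category} (P : Functor X B) (p q : Functor B X) (alpha : NatTrans p q).

(** (i): F : P/q -> P/p is fibered, sends (I, x : A -> q I) to (I, x') where
    x' is the pullback in the fiber P_I of x along alpha_I (with projection
    pi : A' -> A), and is the induced map on morphisms:
    F (u, f) = (u, f') with pi o f' = f o pi. *)
Definition is_pullback_functor (F : Functor (SliceCat P q) (SliceCat P p)) : Prop :=
  fibered_functor (SliceProj P q) (SliceProj P p) F /\
  exists pi : forall o : slob P q, Hom (s_X (F o)) (s_X o),
    (forall (o : slob P q) (e : s_I (F o) = s_I o),
        fiber_pullback P (s_I o) (s_x o) (alpha (s_I o)) (pi o)
          (eq_rect _ (fun I => Hom (s_X (F o)) (p I)) (s_x (F o)) _ e)) /\
    (forall (o o' : slob P q) (m : slhom o o'),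
        comp (pi o') (s_f (Fmor F m)) = comp (s_f m) (pi o)).

Definition is_sigma_functor (S : Functor (SliceCat P p) (SliceCat P q)) : Prop :=
  fibered_functor (SliceProj P p) (SliceProj P q) S /\
  (forall o : slob P p,
      sl_data (S o) =
      existT _ (s_I o) (existT _ (s_X o) (comp (alpha (s_I o)) (s_x o)))) /\
  (forall (o o' : slob P p) (m : slhom o o'),
      pack (s_u (Fmor S m)) = pack (s_u m) /\ pack (s_f (Fmor S m)) = pack (s_f m)).

End AlphaFun.

Arguments is_pullback_functor {X B} P {p q} alpha F.
Arguments is_sigma_functor {X B} P {p q} alpha S.

(* Main.v *)
Require Import Defs.
From Stdlib Require Import ProofIrrelevance IndefiniteDescription.
Set Implicit Arguments.
Unset Strict Implicit.

Section Gen.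
Context {C : Category}.

Lemma pack_inv (a b a' b' : Ob C) (f : Hom a b) (f' : Hom a' b') :
  pack f = pack f' -> a = a' /\ b = b'.
Proof. intro H. apply (f_equal (@projT1 _ _)) in H. simpl in H. injection H. auto. Qed.

Lemma pack_inj (a b : Ob C) (f f' : Hom a b) : pack f = pack f' -> f = f'.
Proof. intro H. unfold pack in H. apply inj_pair2 in H. exact H. Qed.

Lemma pack_comp (a b c a' b' c' : Ob C) (f : Hom a b) (g : Hom b c)
  (f' : Hom a' b') (g' : Hom b' c') :
  pack f = pack f' -> pack g = pack g' -> pack (comp g f) = pack (comp g' f').
Proof.
  intros H1 H2. destruct (pack_inv H1) as [E1 E2]. destruct (pack_inv H2) as [_ E3].
  subst. apply pack_inj in H1. apply pack_inj in H2. subst. reflexivity.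
Qed.

Lemma pack_tr (a b a' b' : Ob C) (f : Hom a b) :
  a = a' -> b = b' -> exists f' : Hom a' b', pack f' = pack f.
Proof. intros; subst; exists f; reflexivity. Qed.

Lemma pack_id (a a' : Ob C) : a = a' -> pack (idm a) = pack (idm a').
Proof. intros; subst; reflexivity. Qed.

Lemma comp_packid_l (a b b' c : Ob C) (k : Hom a b) (e : Hom b b') :
  pack e = pack (idm c) -> pack (comp e k) = pack k.
Proof.
  intro H. destruct (pack_inv H) as [E E']. subst. apply pack_inj in H. subst.
  rewrite comp_id_l. reflexivity.
Qed.

Lemma comp_packid_r (a0 a b c : Ob C) (k : Hom a b) (e : Hom a0 a) :
  pack e = pack (idm c) -> pack (comp k e) = pack k.
Proof.
  intro H. destruct (pack_inv H) as [E E']. subst. apply pack_inj in H. subst.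
  rewrite comp_id_r. reflexivity.
Qed.
End Gen.

Lemma pack_Fmor (C D : Category) (F : Functor C D) (a b a' b' : Ob C)
  (f : Hom a b) (f' : Hom a' b') : pack f = pack f' -> pack (Fmor F f) = pack (Fmor F f').
Proof.
  intro H. destruct (pack_inv H) as [E1 E2]. subst. apply pack_inj in H. subst. reflexivity.
Qed.

Section Fib2.
Context {X B : Category} (P : Functor X B).

Lemma over_id_inv (I : Ob B) (A Y : Ob X) (f : Hom A Y) :
  over_id P I f -> Fob P A = I /\ Fob P Y = I.
Proof. intro H. exact (pack_inv H). Qed.

Lemma over_id_comp_l (I : Ob B) (A Y Z : Ob X) (f : Hom A Y) (g : Hom Z A) :
  over_id P I f -> pack (Fmor P (comp f g)) = pack (Fmor P g).
Proof. intro H. rewrite F_comp. apply comp_packid_l with (c := I). exact H. Qed.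

Lemma over_id_comp_r (I : Ob B) (A Y Z : Ob X) (f : Hom A Y) (g : Hom Y Z) :
  over_id P I f -> pack (Fmor P (comp g f)) = pack (Fmor P g).
Proof. intro H. rewrite F_comp. apply comp_packid_r with (c := I). exact H. Qed.

Lemma over_id_comp (I : Ob B) (A Y Z : Ob X) (f : Hom A Y) (g : Hom Y Z) :
  over_id P I g -> over_id P I f -> over_id P I (comp g f).
Proof. intros Hg Hf. unfold over_id. rewrite (over_id_comp_r g Hf). exact Hg. Qed.

Lemma cart_factor (A' A : Ob X) (c : Hom A' A) (Hc : is_cartesian P c)
  (J I : Ob B) (u : Hom J I) (Hu : pack (Fmor P c) = pack u)
  (K : Ob B) (w : Hom K J) (Z : Ob X) (g : Hom Z A)
  (Hg : pack (Fmor P g) = pack (comp u w)) :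
  exists h : Hom Z A', comp c h = g /\ pack (Fmor P h) = pack w.
Proof.
  destruct (pack_inv Hu) as [E1 E2]. subst J I. apply pack_inj in Hu. subst u.
  destruct (pack_inv Hg) as [E3 _]. subst K. apply pack_inj in Hg.
  destruct (Hc Z w g Hg) as [h [[H1 H2] _]]. exists h. rewrite H2. auto.
Qed.

Lemma cart_uniq (A' A : Ob X) (c : Hom A' A) (Hc : is_cartesian P c)
  (Z : Ob X) (h1 h2 : Hom Z A') :
  comp c h1 = comp c h2 -> pack (Fmor P h1) = pack (Fmor P h2) -> h1 = h2.
Proof.
  intros E1 E2. apply pack_inj in E2.
  destruct (Hc Z (Fmor P h1) (comp c h1) (F_comp P h1 c)) as [h [_ U]].
  rewrite <- (U h1), <- (U h2); auto.
Qed.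

Lemma lift (Hfib : is_fibration P) (Y : Ob X) (J I : Ob B) (u : Hom J I) :
  Fob P Y = I -> exists (A : Ob X) (c : Hom A Y), is_cartesian P c /\ pack (Fmor P c) = pack u.
Proof. intro E. subst I. apply Hfib. Qed.

End Fib2.
Section PB.
Context {X B : Category} (P : Functor X B) (Hfib : is_fibration P)
  (Hfp : has_fibered_pullbacks P).

Lemma fp_pullback (I : Ob B) (A Y Z W : Ob X) (f : Hom A Z) (g : Hom Y Z)
  (a : Hom W A) (b : Hom W Y) :
  fiber_pullback P I f g a b ->
  forall (T : Ob X) (a' : Hom T A) (b' : Hom T Y), comp f a' = comp g b' ->
  exists! h : Hom T W, comp a h = a' /\ comp b h = b'.
Proof.
  intros FP T a' b' Heq.
  pose proof FP as [Hf [Hg [Ha [Hb [Hsq Hu]]]]].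
  destruct (over_id_inv Hf) as [EA EZ]. destruct (over_id_inv Hg) as [EY _].
  destruct (over_id_inv Ha) as [EW _].
  destruct (pack_tr (Fmor P a') eq_refl EA) as [u Hu'].
  assert (Hb' : pack (Fmor P b') = pack u).
  { rewrite Hu'. rewrite <- (over_id_comp_l a' Hf), Heq. symmetry. apply over_id_comp_l with (I := I). exact Hg. }
  destruct (lift Hfib u EA) as [A1 [cA [HcA HuA]]].
  destruct (lift Hfib u EY) as [Y1 [cY [HcY HuY]]].
  destruct (lift Hfib u EZ) as [Z1 [cZ [HcZ HuZ]]].
  destruct (lift Hfib u EW) as [W1 [cW [HcW HuW]]].
  set (K := Fob P T) in *.
  destruct (cart_factor HcZ HuZ (w := idm K) (g := comp f cA)) as [f1 [Ef1 Hf1]].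
  { rewrite comp_id_r, (over_id_comp_l cA Hf). exact HuA. }
  destruct (cart_factor HcZ HuZ (w := idm K) (g := comp g cY)) as [g1 [Eg1 Hg1]].
  { rewrite comp_id_r, (over_id_comp_l cY Hg). exact HuY. }
  destruct (cart_factor HcA HuA (w := idm K) (g := comp a cW)) as [a1 [Ea1 Ha1]].
  { rewrite comp_id_r, (over_id_comp_l cW Ha). exact HuW. }
  destruct (cart_factor HcY HuY (w := idm K) (g := comp b cW)) as [b1 [Eb1 Hb1]].
  { rewrite comp_id_r, (over_id_comp_l cW Hb). exact HuW. }
  destruct Hfp as [_ Hst].
  pose proof (Hst I K u A Y Z W f g a b FP A1 Y1 Z1 W1 cA cY cZ cW f1 g1 a1 b1
     HcA HcY HcZ HcW HuA HuY HuZ HuW Hf1 Hg1 Ha1 Hb1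
     Ef1 Eg1 Ea1 Eb1) as FP1.
  destruct (cart_factor HcA HuA (w := idm K) (g := a')) as [a2 [Ea2 Ha2]].
  { rewrite comp_id_r. symmetry. exact Hu'. }
  destruct (cart_factor HcY HuY (w := idm K) (g := b')) as [b2 [Eb2 Hb2]].
  { rewrite comp_id_r. exact Hb'. }
  assert (Hc2 : comp f1 a2 = comp g1 b2).
  { apply (cart_uniq HcZ).
    - rewrite !comp_assoc, Ef1, Eg1, <- !comp_assoc, Ea2, Eb2. exact Heq.
    - rewrite (over_id_comp_l a2 Hf1), (over_id_comp_l b2 Hg1), Ha2, Hb2. reflexivity. }
  destruct FP1 as [_ [_ [_ [_ [_ Hu1]]]]].
  destruct (Hu1 T a2 b2 Ha2 Hb2 Hc2) as [k [[Hk1 [Hk2 Hk3]] Hkuniq]].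
  exists (comp cW k). split.
  - split.
    + rewrite comp_assoc, <- Ea1, <- comp_assoc, Hk2. exact Ea2.
    + rewrite comp_assoc, <- Eb1, <- comp_assoc, Hk3. exact Eb2.
  - intros h' [Hh1 Hh2].
    destruct (cart_factor HcW HuW (w := idm K) (g := h')) as [k' [Ek' Hk']].
    { rewrite comp_id_r, Hu', <- Hh1. symmetry. apply over_id_comp_l with (I := I). exact Ha. }
    rewrite <- Ek'. f_equal. apply Hkuniq. split; [exact Hk'|split].
    + apply (cart_uniq HcA).
      * rewrite comp_assoc, Ea1, <- comp_assoc, Ek', Hh1. symmetry; exact Ea2.
      * rewrite (over_id_comp_l k' Ha1), Hk', Ha2. reflexivity.
    + apply (cart_uniq HcY).
      * rewrite comp_assoc, Eb1, <- comp_assoc, Ek', Hh2. symmetry; exact Eb2.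
      * rewrite (over_id_comp_l k' Hb1), Hk', Hb2. reflexivity.
Qed.

End PB.
Section SC.
Context {X B : Category} (P : Functor X B) (r : Functor B X) (Hr : is_pointed P r).

Lemma r_pack (I J : Ob B) (u : Hom I J) : pack (Fmor P (Fmor r u)) = pack u.
Proof. apply Hr. Qed.
Lemma r_cart (I J : Ob B) (u : Hom I J) : is_cartesian P (Fmor r u).
Proof. apply Hr. Qed.

Lemma sl_P_f (o o' : slob P r) (m : slhom o o') : pack (Fmor P (s_f m)) = pack (s_u m).
Proof.
  pose proof (f_equal (Fmor P) (s_sq m)) as E.
  apply (f_equal (@pack _ _ _)) in E.
  rewrite (over_id_comp_l _ (s_vert o')) in E. rewrite E.
  rewrite (over_id_comp_r _ (s_vert o)). apply r_pack.
Qed.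

Lemma sl_cart_of (o o' : slob P r) (m : slhom o o') :
  is_cartesian P (s_f m) -> is_cartesian (SliceProj P r) m.
Proof.
  intros Hc Z v g Hg. simpl in Hg.
  destruct (cart_factor Hc (sl_P_f m) (w := v) (g := s_f g)) as [h0 [E0 H0]].
  { rewrite (sl_P_f g), Hg. reflexivity. }
  assert (sq : comp (s_x o) h0 = comp (Fmor r v) (s_x Z)).
  { apply (cart_uniq (r_cart (u := s_u m))).
    - rewrite comp_assoc, <- (s_sq m), <- comp_assoc, E0, (s_sq g), Hg, F_comp, comp_assoc.
      reflexivity.
    - rewrite (over_id_comp_l _ (s_vert o)), (over_id_comp_r _ (s_vert Z)), r_pack. exact H0. }
  exists (@Build_slhom X B P r Z o v h0 sq). split.
  - split.
    + apply slhom_eq; simpl; [symmetry; exact Hg | exact E0].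
    + reflexivity.
  - intros h' [H1 H2]. simpl in H2. apply slhom_eq; simpl.
    + symmetry; exact H2.
    + apply (cart_uniq Hc).
      * rewrite E0. apply (f_equal (@s_f _ _ _ _ _ _)) in H1. simpl in H1. symmetry; exact H1.
      * rewrite H0, (sl_P_f h'), H2. reflexivity.
Qed.

Lemma sl_cart_to (Hfib : is_fibration P) (o o' : slob P r) (m : slhom o o') :
  is_cartesian (SliceProj P r) m -> is_cartesian P (s_f m).
Proof.
  intros Hc T v g Hg.
  destruct (over_id_inv (s_vert o)) as [EXo _].
  destruct (pack_tr v eq_refl EXo) as [v' Hv'].
  set (K := Fob P T) in *.
  assert (Hg' : pack (Fmor P g) = pack (comp (s_u m) v')).
  { rewrite Hg. apply pack_comp; [symmetry; exact Hv' | apply sl_P_f]. }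
  destruct (cart_factor (r_cart (u := comp (s_u m) v')) (r_pack _) (w := idm K)
              (g := comp (s_x o') g)) as [z [Ez Hz]].
  { rewrite comp_id_r, (over_id_comp_l _ (s_vert o')). exact Hg'. }
  set (Zo := {| s_I := K; s_X := T; s_x := z; s_vert := Hz |} : slob P r).
  set (G := @Build_slhom X B P r Zo o' (comp (s_u m) v') g (eq_sym Ez)).
  destruct (Hc Zo v' G eq_refl) as [H [[HH1 HH2] HU]].
  simpl in HH2.
  assert (Hfg : comp (s_f m) (s_f H) = g).
  { apply (f_equal (@s_f _ _ _ _ _ _)) in HH1. exact HH1. }
  exists (s_f H). split.
  - split; [exact Hfg|]. apply pack_inj. rewrite <- Hv', <- HH2. exact (sl_P_f H).
  - intros h' [E1 E2].
    assert (sq : comp (s_x o) h' = comp (Fmor r v') (s_x Zo)).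
    { apply (cart_uniq (r_cart (u := s_u m))).
      - simpl. rewrite comp_assoc, <- (s_sq m), <- comp_assoc, E1, <- Ez, F_comp, <- comp_assoc.
        reflexivity.
      - simpl. rewrite (over_id_comp_l _ (s_vert o)), (over_id_comp_r _ Hz), r_pack, E2.
        symmetry; exact Hv'. }
    set (H' := @Build_slhom X B P r Zo o v' h' sq).
    assert (EH : H = H').
    { apply HU. split; [|reflexivity]. apply slhom_eq; simpl; [reflexivity|exact E1]. }
    rewrite EH. reflexivity.
Qed.

End SC.
Section Alpha.
Context {X B : Category} (P : Functor X B) (p q : Functor B X) (alpha : NatTrans p q)
  (Hfib : is_fibration P) (Hfp : has_fibered_pullbacks P)
  (Hp : is_pointed P p) (Hq : is_pointed P q)
  (Hal : forall I : Ob B, vertical P (alpha I)).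

Lemma alpha_over (I : Ob B) : over_id P I (alpha I).
Proof.
  destruct (Hal I) as [J HJ]. destruct (pack_inv HJ) as [E1 _].
  destruct (pack_inv (r_pack Hp (idm I))) as [E2 _].
  unfold over_id. rewrite HJ. apply pack_id. congruence.
Qed.

Definition sig_ob (o : slob P p) : slob P q :=
  {| s_I := s_I o; s_X := s_X o; s_x := comp (alpha (s_I o)) (s_x o);
     s_vert := over_id_comp (alpha_over (s_I o)) (s_vert o) |}.

Lemma sig_sq (o o' : slob P p) (m : slhom o o') :
  comp (s_x (sig_ob o')) (s_f m) = comp (Fmor q (s_u m)) (s_x (sig_ob o)).
Proof.
  simpl. rewrite <- comp_assoc, (s_sq m), comp_assoc, (nt_nat alpha), <- comp_assoc.
  reflexivity.
Qed.

Definition sig_hom (o o' : slob P p) (m : slhom o o') : slhom (sig_ob o) (sig_ob o') :=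
  @Build_slhom X B P q (sig_ob o) (sig_ob o') (s_u m) (s_f m) (sig_sq m).

Definition SigF : Functor (SliceCat P p) (SliceCat P q).
Proof.
  refine (@Build_Functor (SliceCat P p) (SliceCat P q) sig_ob sig_hom _ _); intros; apply slhom_eq; reflexivity.
Defined.

Lemma SigF_sigma : is_sigma_functor P alpha SigF.
Proof.
  split; [split|split].
  - intros; reflexivity.
  - intros a b m Hc. apply (sl_cart_of Hq). simpl.
    exact (sl_cart_to Hp Hfib Hc).
  - intros; reflexivity.
  - intros; split; reflexivity.
Qed.

Definition pbT (o : slob P q) := {W : Ob X & (Hom W (s_X o) * Hom W (p (s_I o)))%type}.

Lemma pb_ex (o : slob P q) : exists t : pbT o,
  fiber_pullback P (s_I o) (s_x o) (alpha (s_I o)) (fst (projT2 t)) (snd (projT2 t)).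
Proof.
  destruct Hfp as [H1 _].
  destruct (H1 (s_I o) _ _ _ (s_x o) (alpha (s_I o)) (s_vert o) (alpha_over _))
    as [W [a [b Hpb]]].
  exists (existT _ W (a, b)). exact Hpb.
Qed.

Definition pbt (o : slob P q) : pbT o := proj1_sig (constructive_indefinite_description _ (pb_ex o)).
Definition pbW (o : slob P q) : Ob X := projT1 (pbt o).
Definition pba (o : slob P q) : Hom (pbW o) (s_X o) := fst (projT2 (pbt o)).
Definition pbb (o : slob P q) : Hom (pbW o) (p (s_I o)) := snd (projT2 (pbt o)).
Lemma pb_spec (o : slob P q) :
  fiber_pullback P (s_I o) (s_x o) (alpha (s_I o)) (pba o) (pbb o).
Proof. exact (proj2_sig (constructive_indefinite_description _ (pb_ex o))). Qed.

Lemma pbb_vert (o : slob P q) : over_id P (s_I o) (pbb o).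
Proof. apply (pb_spec o). Qed.
Lemma pba_vert (o : slob P q) : over_id P (s_I o) (pba o).
Proof. apply (pb_spec o). Qed.
Lemma pb_sq (o : slob P q) : comp (s_x o) (pba o) = comp (alpha (s_I o)) (pbb o).
Proof. apply (pb_spec o). Qed.

Lemma pb_mono (o : slob P q) (T : Ob X) (h1 h2 : Hom T (pbW o)) :
  comp (pba o) h1 = comp (pba o) h2 -> comp (pbb o) h1 = comp (pbb o) h2 -> h1 = h2.
Proof.
  intros E1 E2.
  destruct (fp_pullback Hfib Hfp (pb_spec o) (a' := comp (pba o) h1) (b' := comp (pbb o) h1))
    as [h [_ U]].
  { rewrite !comp_assoc, pb_sq. reflexivity. }
  rewrite <- (U h1), <- (U h2); auto.
Qed.

Definition pb_ob (o : slob P q) : slob P p :=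
  {| s_I := s_I o; s_X := pbW o; s_x := pbb o; s_vert := pbb_vert o |}.

Lemma pb_hom_ex (o o' : slob P q) (m : slhom o o') :
  exists h : Hom (pbW o) (pbW o'),
    comp (pba o') h = comp (s_f m) (pba o) /\ comp (pbb o') h = comp (Fmor p (s_u m)) (pbb o).
Proof.
  destruct (fp_pullback Hfib Hfp (pb_spec o') (a' := comp (s_f m) (pba o))
              (b' := comp (Fmor p (s_u m)) (pbb o))) as [h [H _]].
  { rewrite !comp_assoc, (s_sq m), <- comp_assoc, pb_sq, comp_assoc, <- (nt_nat alpha).
    reflexivity. }
  exists h; exact H.
Qed.

Definition pb_h (o o' : slob P q) (m : slhom o o') : Hom (pbW o) (pbW o') :=
  proj1_sig (constructive_indefinite_description _ (pb_hom_ex m)).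
Lemma pb_h_spec (o o' : slob P q) (m : slhom o o') :
  comp (pba o') (pb_h m) = comp (s_f m) (pba o) /\
  comp (pbb o') (pb_h m) = comp (Fmor p (s_u m)) (pbb o).
Proof. exact (proj2_sig (constructive_indefinite_description _ (pb_hom_ex m))). Qed.

Definition pb_hom (o o' : slob P q) (m : slhom o o') : slhom (pb_ob o) (pb_ob o') :=
  @Build_slhom X B P p (pb_ob o) (pb_ob o') (s_u m) (pb_h m) (proj2 (pb_h_spec m)).

Lemma pb_hom_id (o : slob P q) : pb_hom (sl_id o) = sl_id (pb_ob o).
Proof.
  apply slhom_eq; [reflexivity|]. simpl. apply pb_mono.
  - rewrite (proj1 (pb_h_spec _)). simpl. rewrite comp_id_l, comp_id_r. reflexivity.
  - rewrite (proj2 (pb_h_spec _)). simpl. rewrite F_id, comp_id_l, comp_id_r. reflexivity.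
Qed.

Lemma pb_hom_comp (o1 o2 o3 : slob P q) (n : slhom o2 o3) (m : slhom o1 o2) :
  pb_hom (sl_comp n m) = sl_comp (pb_hom n) (pb_hom m).
Proof.
  apply slhom_eq; [reflexivity|]. simpl. apply pb_mono.
  - rewrite (proj1 (pb_h_spec _)). simpl. rewrite comp_assoc, (proj1 (pb_h_spec _)).
    rewrite <- !comp_assoc, (proj1 (pb_h_spec _)). reflexivity.
  - rewrite (proj2 (pb_h_spec _)). simpl. rewrite comp_assoc, (proj2 (pb_h_spec _)).
    rewrite <- !comp_assoc, (proj2 (pb_h_spec _)), F_comp, <- comp_assoc. reflexivity.
Qed.

Definition PbF : Functor (SliceCat P q) (SliceCat P p).
Proof.
  refine (@Build_Functor (SliceCat P q) (SliceCat P p) pb_ob pb_hom _ _).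
  - intro; apply pb_hom_id.
  - intros; apply pb_hom_comp.
Defined.


Lemma pb_h_cart (o o' : slob P q) (m : slhom o o') :
  is_cartesian P (s_f m) -> is_cartesian P (pb_h m).
Proof.
  intros Hf T v g Hg.
  pose proof (sl_P_f Hp (pb_hom m)) as HPh. simpl in HPh.
  pose proof (sl_P_f Hq m) as HPf.
  destruct (over_id_inv (pbb_vert o)) as [EW _].
  destruct (pack_tr v eq_refl EW) as [v' Hv'].
  assert (Hg' : pack (Fmor P g) = pack (comp (s_u m) v')).
  { rewrite Hg. apply pack_comp; [symmetry; exact Hv' | exact HPh]. }
  destruct (cart_factor Hf HPf (w := v') (g := comp (pba o') g)) as [k1 [Ek1 Hk1]].
  { rewrite (over_id_comp_l _ (pba_vert o')). exact Hg'. }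
  destruct (cart_factor (r_cart Hp (u := s_u m)) (r_pack Hp _) (w := v') (g := comp (pbb o') g))
    as [k2 [Ek2 Hk2]].
  { rewrite (over_id_comp_l _ (pbb_vert o')). exact Hg'. }
  assert (Hc : comp (s_x o) k1 = comp (alpha (s_I o)) k2).
  { apply (cart_uniq (r_cart Hq (u := s_u m))).
    - rewrite comp_assoc, <- (s_sq m), <- comp_assoc, Ek1, comp_assoc, pb_sq.
      rewrite <- comp_assoc, <- Ek2, comp_assoc, (nt_nat alpha), <- comp_assoc. reflexivity.
    - rewrite (over_id_comp_l _ (s_vert o)), (over_id_comp_l _ (alpha_over _)), Hk1, Hk2.
      reflexivity. }
  destruct (fp_pullback Hfib Hfp (pb_spec o) Hc) as [k [[Ek3 Ek4] _]].
  exists k. split.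
  - split.
    + apply pb_mono.
      * rewrite comp_assoc, (proj1 (pb_h_spec m)), <- comp_assoc, Ek3. exact Ek1.
      * rewrite comp_assoc, (proj2 (pb_h_spec m)), <- comp_assoc, Ek4. exact Ek2.
    + apply pack_inj. rewrite <- (over_id_comp_l k (pba_vert o)), Ek3, Hk1. exact Hv'.
  - intros k' [E1 E2].
    apply pb_mono.
    + rewrite Ek3. apply (cart_uniq Hf).
      * rewrite Ek1, comp_assoc, <- (proj1 (pb_h_spec m)), <- comp_assoc, E1. reflexivity.
      * rewrite Hk1, (over_id_comp_l k' (pba_vert o)), E2. first [exact Hv' | exact (eq_sym Hv')].
    + rewrite Ek4. apply (cart_uniq (r_cart Hp (u := s_u m))).
      * rewrite Ek2, comp_assoc, <- (proj2 (pb_h_spec m)), <- comp_assoc, E1. reflexivity.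
      * rewrite Hk2, (over_id_comp_l k' (pbb_vert o)), E2. first [exact Hv' | exact (eq_sym Hv')].
Qed.

Lemma PbF_pullback : is_pullback_functor P alpha PbF.
Proof.
  split; [split|].
  - intros; reflexivity.
  - intros a b m Hc. apply (sl_cart_of Hp). simpl.
    apply pb_h_cart. exact (sl_cart_to Hq Hfib Hc).
  - exists pba. split.
    + intros o e. simpl in e. rewrite (proof_irrelevance _ e eq_refl). simpl. apply pb_spec.
    + intros o o' m. simpl. apply (proj1 (pb_h_spec m)).
Qed.


Lemma sl_data_inj (o1 o2 : slob P q) : sl_data o1 = sl_data o2 -> o1 = o2.
Proof.
  destruct o1 as [I1 X1 x1 v1], o2 as [I2 X2 x2 v2]. unfold sl_data. simpl. intro H.
  pose proof (f_equal (@projT1 _ _) H) as E. simpl in E. subst I2.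
  apply inj_pair2 in H.
  pose proof (f_equal (@projT1 _ _) H) as E. simpl in E. subst X2.
  apply inj_pair2 in H. subst x2. f_equal. apply proof_irrelevance.
Qed.

Lemma pbF_gen (o : slob P q) (o1 : slob P p) (pi1 : Hom (s_X o1) (s_X o))
  (e : s_I o1 = s_I o)
  (H : fiber_pullback P (s_I o) (s_x o) (alpha (s_I o)) pi1
         (eq_rect _ (fun I => Hom (s_X o1) (p I)) (s_x o1) _ e)) :
  forall (T : Ob X) (h1 h2 : Hom T (s_X o1)),
    comp pi1 h1 = comp pi1 h2 -> comp (s_x o1) h1 = comp (s_x o1) h2 -> h1 = h2.
Proof.
  destruct o1 as [I1 X1 x1 v1]. simpl in *. subst I1. simpl in H.
  intros T h1 h2 E1 E2.
  destruct (fp_pullback Hfib Hfp H (a' := comp pi1 h1) (b' := comp x1 h1)) as [h [_ U]].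
  { rewrite !comp_assoc. f_equal. apply H. }
  rewrite <- (U h1), <- (U h2); auto.
Qed.

Lemma eta_gen (a : slob P p) (o : slob P q) (Eo : o = sig_ob a) (o2 : slob P p)
  (pi2 : Hom (s_X o2) (s_X o)) (e : s_I o2 = s_I o)
  (H : fiber_pullback P (s_I o) (s_x o) (alpha (s_I o)) pi2
         (eq_rect _ (fun I => Hom (s_X o2) (p I)) (s_x o2) _ e)) :
  exists m : slhom a o2, pack (s_u m) = pack (idm (s_I a)) /\
    pack (comp pi2 (s_f m)) = pack (idm (s_X a)) /\
    pack (comp (s_x o2) (s_f m)) = pack (s_x a).
Proof.
  subst o. destruct o2 as [I2 X2 x2 v2]. simpl in *. subst I2. simpl in H.
  destruct (fp_pullback Hfib Hfp H (a' := idm (s_X a)) (b' := s_x a)) as [h [[E1 E2] _]].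
  { rewrite comp_id_r. reflexivity. }
  assert (sq : comp x2 h = comp (Fmor p (idm (s_I a))) (s_x a)).
  { rewrite F_id, comp_id_l. exact E2. }
  exists (@Build_slhom X B P p a {| s_I := s_I a; s_X := X2; s_x := x2; s_vert := v2 |}
            (idm (s_I a)) h sq).
  simpl. rewrite E1, E2. auto.
Qed.

Lemma eps_gen (b : slob P q) (o1 : slob P p) (o3 : slob P q) (E3 : o3 = sig_ob o1)
  (pi1 : Hom (s_X o1) (s_X b)) (e : s_I o1 = s_I b)
  (H : fiber_pullback P (s_I b) (s_x b) (alpha (s_I b)) pi1
         (eq_rect _ (fun I => Hom (s_X o1) (p I)) (s_x o1) _ e)) :
  exists m : slhom o3 b, pack (s_u m) = pack (idm (s_I b)) /\ pack (s_f m) = pack pi1.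
Proof.
  subst o3. destruct o1 as [I1 X1 x1 v1]. simpl in *. subst I1. simpl in H.
  destruct H as [_ [_ [_ [_ [Hsq _]]]]].
  assert (sq : comp (s_x b) pi1 = comp (Fmor q (idm (s_I b)))
                 (s_x (sig_ob {| s_I := s_I b; s_X := X1; s_x := x1; s_vert := v1 |}))).
  { simpl. rewrite F_id, comp_id_l. exact Hsq. }
  exists (@Build_slhom X B P q (sig_ob {| s_I := s_I b; s_X := X1; s_x := x1; s_vert := v1 |}) b (idm (s_I b)) pi1 sq). simpl. auto.
Qed.


Section Adj.
Context (F : Functor (SliceCat P q) (SliceCat P p)) (S : Functor (SliceCat P p) (SliceCat P q))
  (HFf : fibered_functor (SliceProj P q) (SliceProj P p) F)
  (pi : forall o : slob P q, Hom (s_X (F o)) (s_X o))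
  (Hpi1 : forall (o : slob P q) (e : s_I (F o) = s_I o),
        fiber_pullback P (s_I o) (s_x o) (alpha (s_I o)) (pi o)
          (eq_rect _ (fun I => Hom (s_X (F o)) (p I)) (s_x (F o)) _ e))
  (Hpi2 : forall (o o' : slob P q) (m : slhom o o'),
        comp (pi o') (s_f (Fmor F m)) = comp (s_f m) (pi o))
  (HS : is_sigma_functor P alpha S).

Lemma HFu (o o' : slob P q) (m : slhom o o') : pack (s_u (Fmor F m)) = pack (s_u m).
Proof. exact (proj1 HFf o o' m). Qed.

Lemma F0 (o : slob P q) : s_I (F o) = s_I o.
Proof. exact (proj1 (pack_inv (HFu (idm (C := SliceCat P q) o)))). Qed.

Lemma S0 (a : slob P p) : S a = sig_ob a.
Proof. apply sl_data_inj. rewrite (proj1 (proj2 HS) a). reflexivity. Qed.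

Lemma HSu (o o' : slob P p) (m : slhom o o') : pack (s_u (Fmor S m)) = pack (s_u m).
Proof. exact (proj1 (proj2 (proj2 HS) o o' m)). Qed.
Lemma HSf (o o' : slob P p) (m : slhom o o') : pack (s_f (Fmor S m)) = pack (s_f m).
Proof. exact (proj2 (proj2 (proj2 HS) o o' m)). Qed.

Lemma SI (a : slob P p) : s_I (S a) = s_I a.
Proof. rewrite S0. reflexivity. Qed.
Lemma SX (a : slob P p) : s_X (S a) = s_X a.
Proof. rewrite S0. reflexivity. Qed.

Lemma FMONO (o : slob P q) (T : Ob X) (h1 h2 : Hom T (s_X (F o))) :
  comp (pi o) h1 = comp (pi o) h2 -> comp (s_x (F o)) h1 = comp (s_x (F o)) h2 -> h1 = h2.
Proof. revert T h1 h2. exact (pbF_gen (Hpi1 (F0 o))). Qed.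

Lemma eta_ex (a : slob P p) : exists m : slhom a (F (S a)),
  pack (s_u m) = pack (idm (s_I a)) /\
  pack (comp (pi (S a)) (s_f m)) = pack (idm (s_X a)) /\
  pack (comp (s_x (F (S a))) (s_f m)) = pack (s_x a).
Proof. exact (eta_gen (S0 a) (Hpi1 (F0 (S a)))). Qed.

Lemma eps_ex (b : slob P q) : exists m : slhom (S (F b)) b,
  pack (s_u m) = pack (idm (s_I b)) /\ pack (s_f m) = pack (pi b).
Proof. exact (eps_gen (S0 (F b)) (Hpi1 (F0 b))). Qed.

Definition eta (a : slob P p) : slhom a (F (S a)) :=
  proj1_sig (constructive_indefinite_description _ (eta_ex a)).
Definition eps (b : slob P q) : slhom (S (F b)) b :=
  proj1_sig (constructive_indefinite_description _ (eps_ex b)).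
Lemma eta_spec (a : slob P p) :
  pack (s_u (eta a)) = pack (idm (s_I a)) /\
  pack (comp (pi (S a)) (s_f (eta a))) = pack (idm (s_X a)) /\
  pack (comp (s_x (F (S a))) (s_f (eta a))) = pack (s_x a).
Proof. exact (proj2_sig (constructive_indefinite_description _ (eta_ex a))). Qed.
Lemma eps_spec (b : slob P q) :
  pack (s_u (eps b)) = pack (idm (s_I b)) /\ pack (s_f (eps b)) = pack (pi b).
Proof. exact (proj2_sig (constructive_indefinite_description _ (eps_ex b))). Qed.

Lemma Adj_main : fibered_adjunction (SliceProj P p) (SliceProj P q) S F.
Proof.
  split; [exact (proj1 HS)|]. split; [exact HFf|].
  exists eta, eps.
  split; [|split; [|split; [|split; [|split]]]].
  -
    intros a a' f. apply slhom_eq; simpl.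
    + apply pack_inj.
      transitivity (pack (comp (idm (s_I a')) (s_u f))).
      { apply pack_comp; [reflexivity | apply eta_spec]. }
      rewrite comp_id_l.
      transitivity (pack (comp (s_u f) (idm (s_I a)))).
      { rewrite comp_id_r; reflexivity. }
      symmetry. apply pack_comp; [apply eta_spec|].
      rewrite HFu. apply HSu.
    + apply (FMONO (o := S a')).
      * apply pack_inj. rewrite comp_assoc.
        transitivity (pack (comp (idm (s_X a')) (s_f f))).
        { apply pack_comp; [reflexivity | apply eta_spec]. }
        rewrite comp_id_l. rewrite comp_assoc, Hpi2, <- comp_assoc.
        transitivity (pack (comp (s_f f) (idm (s_X a)))).
        { rewrite comp_id_r; reflexivity. }
        symmetry. apply pack_comp; [apply eta_spec | apply HSf].
      * apply pack_inj. rewrite comp_assoc.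
        transitivity (pack (comp (s_x a') (s_f f))).
        { apply pack_comp; [reflexivity | apply eta_spec]. }
        rewrite (s_sq f). rewrite comp_assoc, (s_sq (Fmor F (Fmor S f))), <- comp_assoc.
        symmetry. apply pack_comp; [apply eta_spec|]. apply pack_Fmor.
        rewrite HFu. apply HSu.
  -
    intros b b' g. apply slhom_eq; simpl.
    + apply pack_inj.
      transitivity (pack (comp (idm (s_I b')) (s_u g))).
      { apply pack_comp; [|apply eps_spec]. rewrite HSu. apply HFu. }
      rewrite comp_id_l.
      transitivity (pack (comp (s_u g) (idm (s_I b)))).
      { rewrite comp_id_r; reflexivity. }
      apply pack_comp; [symmetry; apply eps_spec | reflexivity].
    + apply pack_inj.
      transitivity (pack (comp (pi b') (s_f (Fmor F g)))).
      { apply pack_comp; [apply HSf | apply eps_spec]. }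
      rewrite Hpi2. apply pack_comp; [symmetry; apply eps_spec | reflexivity].
  -
    intro a. apply slhom_eq; simpl.
    + apply pack_inj.
      transitivity (pack (comp (idm (s_I (S a))) (idm (s_I (S a))))).
      { apply pack_comp; [|apply eps_spec]. rewrite HSu, (proj1 (eta_spec a)).
        apply pack_id. symmetry; apply SI. }
      rewrite comp_id_l. reflexivity.
    + apply pack_inj.
      transitivity (pack (comp (pi (S a)) (s_f (eta a)))).
      { apply pack_comp; [apply HSf | apply eps_spec]. }
      rewrite (proj1 (proj2 (eta_spec a))). apply pack_id. symmetry; apply SX.
  -
    intro b. apply slhom_eq; simpl.
    + apply pack_inj.
      transitivity (pack (comp (idm (s_I (F b))) (idm (s_I (F b))))).
      { apply pack_comp; [apply eta_spec|]. rewrite HFu, (proj1 (eps_spec b)).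
        apply pack_id. symmetry; apply F0. }
      rewrite comp_id_l. reflexivity.
    + apply (FMONO (o := b)).
      * apply pack_inj. rewrite comp_assoc, Hpi2, <- comp_assoc.
        apply pack_comp; [apply eta_spec | apply eps_spec].
      * apply pack_inj. rewrite comp_assoc, (s_sq (Fmor F (eps b))), <- comp_assoc.
        transitivity (pack (comp (idm (p (s_I (F b)))) (s_x (F b)))).
        { apply pack_comp; [apply eta_spec|].
          rewrite <- F_id. apply pack_Fmor. rewrite HFu, (proj1 (eps_spec b)).
          apply pack_id. symmetry; apply F0. }
        rewrite comp_id_l, comp_id_r. reflexivity.
  - intro a. exists (s_I a). simpl. apply eta_spec.
  - intro b. exists (s_I b). simpl. apply eps_spec.
Qed.

End Adj.

End Alpha.

Theorem mainTheorem4 (X B : Category) (P : Functor X B) (p q : Functor B X)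
  (alpha : NatTrans p q) :
  is_fibration P ->
  has_fibered_pullbacks P ->
  is_pointed P p ->
  is_pointed P q ->
  (forall I : Ob B, vertical P (alpha I)) ->
  (exists F, is_pullback_functor P alpha F) /\
  (exists S, is_sigma_functor P alpha S) /\
  (forall F S, is_pullback_functor P alpha F -> is_sigma_functor P alpha S ->
     fibered_adjunction (SliceProj P p) (SliceProj P q) S F).
Proof.
  intros Hfib Hfp Hp Hq Hal. split; [|split].
  - eexists. exact (PbF_pullback Hfib Hfp Hp Hq Hal).
  - eexists. exact (SigF_sigma Hfib Hp Hq Hal).
  - intros F S [HFf [pi [Hpi1 Hpi2]]] HS.
    exact (Adj_main Hfib Hfp Hp Hal HFf Hpi1 Hpi2 HS).
Qed.
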